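(* Consider the following kinetic transport model. Let $\{Z_k\}_{k\ge1}$ be a Markov chain on the two states $\{\mathrm{F},\mathrm{A}\}$ with transition matrix $$\begin{pmatrix}1-a & a\\ b & 1-b\end{pmatrix}$$ (rows and columns indexed by $\mathrm F,\mathrm A$), $a,b\in[0,1]$, $a+b=1$, and with initial distribution equal to the stationary distribution $(\frac{b}{a+b},\frac{a}{a+b})$. Let $K_n=\sum_{k=1}^n \mathbf 1_{\{Z_k=\mathrm F\}}$. Independently of $\{Z_k\}$, let $(X_k,Y_k)_{k\ge1}$ be i.i.d. with $$P((X_k,Y_k)=(j,0))=\alpha,\qquad P((X_k,Y_k)=(0,j))=\beta\qquad (j=\pm1),$$ $\alpha,\beta\ge0$, $\alpha+\beta=1/2$. Let $S(n)=(S_X(n),S_Y(n))=\sum_{k=1}^{K_n}(X_k+1,Y_k)$. Then for $n\ge1$ and $0\le x\le n$, $$\operatorname{Var}(S_Y(n)\mid S_X(n)=n+x)=\operatorname{Var}(S_Y(n)\mid S_X(n)=n-x).$$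
   Context: Conditional variances are considered for conditioning events of positive probability. *)

(* Defs.v *)
From mathcomp Require Import all_boot all_order all_algebra.
Set Implicit Arguments. Unset Strict Implicit. Unset Printing Implicit Defensive.
Import Order.TTheory GRing.Theory Num.Theory.
Local Open Scope ring_scope.

Section Model.
Variable R : realFieldType.
Variables (a b alpha beta : R).

(* States of the chain: true = F, false = A. *)
Definition trans (s t : bool) : R :=
  match s, t with
  | true, true => 1 - a
  | true, false => a
  | false, true => b
  | false, false => 1 - b
  end.

Definition init_dist (s : bool) : R := if s then b / (a + b) else a / (a + b).

Fixpoint mc_tail (s : bool) (l : seq bool) : R :=
  match l with
  | [::] => 1
  | t :: l' => trans s t * mc_tail t l'
  end.

Definition mc_prob (l : seq bool) : R :=
  match l with
  | [::] => 1
  | s :: l' => init_dist s * mc_tail s l'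
  end.

Definition stepX (i : 'I_4) : int :=
  match val i with 0%N => 1 | 1%N => -1 | _ => 0 end.
Definition stepY (i : 'I_4) : int :=
  match val i with 2%N => 1 | 3%N => -1 | _ => 0 end.
Definition step_prob (i : 'I_4) : R := if (val i < 2)%N then alpha else beta.

Variable n : nat.

(* Outcomes: (Z_1..Z_n) and ((X_k,Y_k))_{k=1..n}, indices shifted by one. *)
Definition Omega := ({ffun 'I_n -> bool} * {ffun 'I_n -> 'I_4})%type.

Definition weight (w : Omega) : R :=
  mc_prob [seq w.1 i | i <- enum 'I_n] * \prod_(i < n) step_prob (w.2 i).

Definition Kn (w : Omega) : nat := (\sum_(i < n) (w.1 i : nat))%N.

Definition SX (w : Omega) : int :=
  \sum_(i < n | (i < Kn w)%N) (stepX (w.2 i) + 1).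
Definition SY (w : Omega) : int :=
  \sum_(i < n | (i < Kn w)%N) stepY (w.2 i).

Definition Prob (A : pred Omega) : R := \sum_(w | A w) weight w.

Definition cond_exp (f : Omega -> R) (A : pred Omega) : R :=
  (\sum_(w | A w) weight w * f w) / Prob A.

Definition cond_var (f : Omega -> R) (A : pred Omega) : R :=
  cond_exp (fun w => (f w - cond_exp f A) ^+ 2) A.

End Model.

(* Main.v *)
Require Import Defs.
From mathcomp Require Import all_boot all_order all_algebra.
From mathcomp Require Import ring lra zify.
Import Order.TTheory GRing.Theory Num.Theory.
Local Open Scope ring_scope.

Section Aux.
Variable (T : finType) (n : nat).

Definition fcons (t : T) (g : {ffun 'I_n -> T}) : {ffun 'I_n.+1 -> T} :=
  [ffun i => if unlift ord0 i is Some j then g j else t].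
Definition frcons (g : {ffun 'I_n -> T}) (t : T) : {ffun 'I_n.+1 -> T} :=
  [ffun i => if unlift ord_max i is Some j then g j else t].

Lemma fcons0 t g : fcons t g ord0 = t.
Proof. by rewrite ffunE unlift_none. Qed.
Lemma fconsS t g i : fcons t g (lift ord0 i) = g i.
Proof. by rewrite ffunE liftK. Qed.
Lemma frconsM g t : frcons g t ord_max = t.
Proof. by rewrite ffunE unlift_none. Qed.
Lemma frconsW g t i : frcons g t (widen_ord (leqnSn n) i) = g i.
Proof.
have -> : widen_ord (leqnSn n) i = lift ord_max i by apply/val_inj; exact: (esym (lift_max i)).
by rewrite ffunE liftK.
Qed.

Lemma sum_fcons (R : nmodType) (F : {ffun 'I_n.+1 -> T} -> R) :
  \sum_f F f = \sum_t \sum_g F (fcons t g).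
Proof.
rewrite pair_big /=.
rewrite (reindex (fun p : T * {ffun 'I_n -> T} => fcons p.1 p.2)) //.
exists (fun f : {ffun 'I_n.+1 -> T} => (f ord0, [ffun j : 'I_n => f (lift ord0 j)])) => [[t g] _|f _] /=.
  by rewrite fcons0; congr pair; apply/ffunP => j; rewrite ffunE fconsS.
apply/ffunP => i; rewrite ffunE; case: unliftP => [j ->|->] //.
by rewrite ffunE.
Qed.

Lemma sum_frcons (R : nmodType) (F : {ffun 'I_n.+1 -> T} -> R) :
  \sum_f F f = \sum_g \sum_t F (frcons g t).
Proof.
rewrite pair_big /=.
rewrite (reindex (fun p : {ffun 'I_n -> T} * T => frcons p.1 p.2)) //.
exists (fun f : {ffun 'I_n.+1 -> T} => ([ffun j : 'I_n => f (lift ord_max j)], f ord_max)) => [[g t] _|f _] /=.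
  rewrite frconsM; congr pair; apply/ffunP => j; rewrite ffunE.
  by rewrite /frcons ffunE liftK.
apply/ffunP => i; rewrite ffunE; case: unliftP => [j ->|->] //.
by rewrite ffunE.
Qed.
End Aux.
Arguments fcons {T n}.
Arguments frcons {T n}.

Section Model.
Variables (R : realFieldType) (a b alpha beta : R).

Lemma Kn_cons n z (w1 : {ffun 'I_n -> bool}) (W : {ffun 'I_n.+1 -> 'I_4})
  (W' : {ffun 'I_n -> 'I_4}) :
  Kn ((fcons z w1, W) : Omega n.+1) = (z + Kn ((w1, W') : Omega n))%N.
Proof.
rewrite /Kn big_ord_recl /= fcons0; congr addn.
by apply: eq_bigr => i _; rewrite fconsS.
Qed.

Lemma Kn_le n (w : Omega n) : (Kn w <= n)%N.
Proof.
rewrite /Kn -[X in (_ <= X)%N]card_ord -sum1_card.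
by apply: leq_sum => i _; case: (w.1 i).
Qed.

Lemma sumK_true n w1 t w2 (h : 'I_4 -> int) :
 \sum_(i < n.+1 | (i < Kn ((fcons true w1, fcons t w2) : Omega n.+1))%N) h (fcons t w2 i)
  = h t + \sum_(i < n | (i < Kn ((w1,w2) : Omega n))%N) h (w2 i).
Proof.
rewrite (Kn_cons _ _ _ _ w2) big_mkcond big_ord_recl /= fcons0.
rewrite [in RHS]big_mkcond; congr (_ + _).
apply: eq_bigr => i _; rewrite fconsS /=.
by rewrite /bump /= !add1n ltnS.
Qed.

Lemma sumK_false n w1 t w2 (h : 'I_4 -> int) :
 \sum_(i < n.+1 | (i < Kn ((fcons false w1, frcons w2 t) : Omega n.+1))%N) h (frcons w2 t i)
  = \sum_(i < n | (i < Kn ((w1,w2) : Omega n))%N) h (w2 i).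
Proof.
rewrite (Kn_cons _ _ _ _ w2) big_mkcond big_ord_recr /= add0n.
have -> : (n < Kn ((w1, w2) : Omega n))%N = false by apply/negbTE; rewrite -leqNgt Kn_le.
rewrite addr0 [in RHS]big_mkcond.
by apply: eq_bigr => i _; rewrite frconsW.
Qed.

Definition pz (z : bool) := if z then b else a.

Lemma mc_tailE (hab : a + b = 1) s l : mc_tail a b s l = \prod_(t <- l) pz t.
Proof.
elim: l s => [|t l IH] s /=; first by rewrite big_nil.
rewrite big_cons IH; congr (_ * _).
by case: s; case: t => /=; rewrite /pz /=; lra.
Qed.

Lemma weightE (hab : a + b = 1) n (w : Omega n) :
  weight a b alpha beta w =
  (\prod_(i < n) pz (w.1 i)) * \prod_(i < n) step_prob alpha beta (w.2 i).
Proof.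
rewrite /weight; congr (_ * _).
have -> : mc_prob a b [seq w.1 i | i <- enum 'I_n] = \prod_(t <- [seq w.1 i | i <- enum 'I_n]) pz t.
  case: [seq w.1 i | i <- enum 'I_n] => [|i s] /=; first by rewrite big_nil.
  rewrite big_cons (mc_tailE hab); congr (_ * _).
  by case: i; rewrite /init_dist /pz hab divr1.
by rewrite big_map big_enum.
Qed.

End Model.

Section Rec.
Variables (R : realFieldType) (a b alpha beta : R).
Hypothesis hab : a + b = 1.
End Rec.

Lemma sum_Omega (R : nmodType) n (F : Omega n -> R) :
  \sum_(w : Omega n) F w = \sum_(w1 : {ffun 'I_n -> bool}) \sum_(w2 : {ffun 'I_n -> 'I_4}) F (w1, w2).
Proof. by rewrite pair_big; apply: eq_bigr => -[]. Qed.

Lemma SX_true n w1 t w2 : SX ((fcons true w1, fcons t w2) : Omega n.+1) = (stepX t + 1) + SX ((w1, w2) : Omega n).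
Proof. exact: (sumK_true _ _ _ _ (fun u => stepX u + 1)). Qed.
Lemma SY_true n w1 t w2 : SY ((fcons true w1, fcons t w2) : Omega n.+1) = stepY t + SY ((w1, w2) : Omega n).
Proof. exact: (sumK_true _ _ _ _ stepY). Qed.
Lemma SX_false n w1 t w2 : SX ((fcons false w1, frcons w2 t) : Omega n.+1) = SX ((w1, w2) : Omega n).
Proof. exact: (sumK_false _ _ _ _ (fun u => stepX u + 1)). Qed.
Lemma SY_false n w1 t w2 : SY ((fcons false w1, frcons w2 t) : Omega n.+1) = SY ((w1, w2) : Omega n).
Proof. exact: (sumK_false _ _ _ _ stepY). Qed.

Section Rec2.
Variables (R : realFieldType) (a b alpha beta : R).

Lemma weight_true (hab : a + b = 1) n w1 t w2 :
  weight a b alpha beta ((fcons true w1, fcons t w2) : Omega n.+1)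
  = b * step_prob alpha beta t * weight a b alpha beta ((w1, w2) : Omega n).
Proof.
rewrite !weightE //= !big_ord_recl fcons0 fcons0 /=.
under eq_bigr do rewrite fconsS.
under [X in _ * (_ * X)]eq_bigr do rewrite fconsS.
rewrite /pz; ring.
Qed.

Lemma weight_false (hab : a + b = 1) n w1 t w2 :
  weight a b alpha beta ((fcons false w1, frcons w2 t) : Omega n.+1)
  = a * step_prob alpha beta t * weight a b alpha beta ((w1, w2) : Omega n).
Proof.
rewrite !weightE //= big_ord_recl big_ord_recr fcons0 frconsM /=.
under eq_bigr do rewrite fconsS.
under [X in _ * (X * _)]eq_bigr do rewrite frconsW.
rewrite /pz; ring.
Qed.

Definition N n (s : int) (g : int -> R) : R :=
  \sum_(w : Omega n) weight a b alpha beta w * ((SX w == s)%:R * g (SY w)).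

Lemma eq_shift (u v s : int) : (u + v == s) = (v == s - u).
Proof. by apply/idP/idP => /eqP H; apply/eqP; lia. Qed.

Lemma sp_sum (hal : alpha + beta = 1 / 2) : \sum_(t : 'I_4) step_prob alpha beta t = 1.
Proof.
rewrite !big_ord_recl big_ord0 /step_prob /=.
lra.
Qed.

Lemma N_rec (hab : a + b = 1) (hal : alpha + beta = 1 / 2) n s g :
  N n.+1 s g = a * N n s g +
    b * \sum_(t : 'I_4) step_prob alpha beta t *
          N n (s - (stepX t + 1)) (fun y => g (stepY t + y)).
Proof.
rewrite /N sum_Omega sum_fcons big_bool /= addrC; congr (_ + _).
  rewrite [in RHS]sum_Omega mulr_sumr; apply: eq_bigr => w1 _.
  rewrite sum_frcons mulr_sumr; apply: eq_bigr => w2 _.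
  under eq_bigr do rewrite weight_false // SX_false SY_false.
  rewrite -[RHS]mulr1 -(sp_sum hal) mulr_sumr; apply: eq_bigr => t _; ring.
under eq_bigr do rewrite sum_fcons.
rewrite exchange_big mulr_sumr; apply: eq_bigr => t _.
rewrite [in RHS]sum_Omega !mulr_sumr; apply: eq_bigr => w1 _.
rewrite !mulr_sumr; apply: eq_bigr => w2 _.
rewrite weight_true // SX_true SY_true eq_shift; ring.
Qed.
End Rec2.

Section Q.
Variables (R : realFieldType) (a b alpha beta : R).
Local Notation N := (@N R a b alpha beta).

Lemma N_ext n s s' g g' : s = s' -> g =1 g' -> N n s g = N n s' g'.
Proof. by move=> -> eg; apply: eq_bigr => w _; rewrite eg. Qed.

Lemma Q_rec (hab : a + b = 1) (hal : alpha + beta = 1 / 2) n (j : int) g :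
  N n.+1 (n.+1%:Z + j) g =
  (a + b * alpha) * N n (n%:Z + (j + 1)) g + b * alpha * N n (n%:Z + (j - 1)) g
  + b * beta * (N n (n%:Z + j) (fun y => g (1 + y)) + N n (n%:Z + j) (fun y => g (-1 + y))).
Proof.
rewrite N_rec // !big_ord_recl big_ord0 /=.
have h0 : N n (n.+1%:Z + j - (stepX ord0 + 1)) (fun y : int => g (stepY ord0 + y)) = N n (n%:Z + (j - 1)) g.
  by apply: N_ext => [|y] /=; [rewrite /stepX /=; lia | rewrite add0r].
have h1 : N n (n.+1%:Z + j - (stepX (lift ord0 (@ord0 2)) + 1)) (fun y : int => g (stepY (lift ord0 (@ord0 2)) + y)) = N n (n%:Z + (j + 1)) g.
  by apply: N_ext => [|y] /=; [rewrite /stepX /=; lia | rewrite add0r].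
have h2 : N n (n.+1%:Z + j - (stepX (lift ord0 (lift ord0 (@ord0 1))) + 1)) (fun y : int => g (stepY (lift ord0 (lift ord0 (@ord0 1))) + y)) = N n (n%:Z + j) (fun y => g (1 + y)).
  by apply: N_ext => [|y] /=; [rewrite /stepX /=; lia | by []].
have h3 : N n (n.+1%:Z + j - (stepX (lift ord0 (lift ord0 (lift ord0 (@ord0 0)))) + 1)) (fun y : int => g (stepY (lift ord0 (lift ord0 (lift ord0 (@ord0 0)))) + y)) = N n (n%:Z + j) (fun y => g (-1 + y)).
  by apply: N_ext => [|y] /=; [rewrite /stepX /=; lia | by []].
rewrite h0 h1 h2 h3 /step_prob /=.
have -> : N n (n.+1%:Z + j) g = N n (n%:Z + (j + 1)) g by apply: N_ext => //; lia.
ring.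
Qed.
End Q.

Section Sym.
Variables (R : realFieldType) (a b alpha beta : R).
Local Notation N := (@N R a b alpha beta).

Lemma N0 s g : s != 0 -> N 0 s g = 0.
Proof.
move=> hs; apply: big1 => w _.
have -> : SX w = 0 by rewrite /SX big_ord0.
by rewrite eq_sym (negbTE hs) mul0r mulr0.
Qed.

Lemma sym (hab : a + b = 1) (hal : alpha + beta = 1 / 2) n :
  forall (j : nat) g, (a + b * alpha) ^+ j * N n (n%:Z + j%:Z) g
                    = (b * alpha) ^+ j * N n (n%:Z - j%:Z) g.
Proof.
elim: n => [|n IH] j g.
  case: j => [|k]; first by rewrite !expr0 !mul1r; apply: N_ext => //; lia.
  rewrite !N0 ?mulr0 //; apply/eqP; lia.
case: j => [|k]; first by rewrite !expr0 !mul1r; apply: N_ext => //; lia.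
rewrite !Q_rec //.
have e1 : N n (n%:Z + (k.+1%:Z + 1)) g = N n (n%:Z + k.+2%:Z) g by apply: N_ext => //; lia.
have e2 : N n (n%:Z + (k.+1%:Z - 1)) g = N n (n%:Z + k%:Z) g by apply: N_ext => //; lia.
have e3 : N n (n%:Z + (- k.+1%:Z + 1)) g = N n (n%:Z - k%:Z) g by apply: N_ext => //; lia.
have e4 : N n (n%:Z + (- k.+1%:Z - 1)) g = N n (n%:Z - k.+2%:Z) g by apply: N_ext => //; lia.
rewrite e1 e2 e3 e4.
set c0 := a + b * alpha; set c2 := b * alpha.
have I2 := IH k.+2 g; have I0 := IH k g.
have Ip := IH k.+1 (fun y => g (1 + y)); have Im := IH k.+1 (fun y => g (-1 + y)).
rewrite -/c0 -/c2 in I2 I0 Ip Im.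
transitivity (c0 ^+ k.+2 * N n (n%:Z + k.+2%:Z) g + c2 * c0 * (c0 ^+ k * N n (n%:Z + k%:Z) g)
   + b * beta * (c0 ^+ k.+1 * N n (n%:Z + k.+1%:Z) (fun y => g (1 + y))
               + c0 ^+ k.+1 * N n (n%:Z + k.+1%:Z) (fun y => g (-1 + y)))).
  rewrite !exprS; ring.
rewrite I2 I0 Ip Im !exprS; ring.
Qed.

End Sym.

Section Final.
Variables (R : realFieldType) (a b alpha beta : R).
Local Notation N := (@N R a b alpha beta).

Lemma degen (hab : a + b = 1) (hal : alpha + beta = 1 / 2) :
  a + b * alpha = 0 -> b * alpha = 0 ->
  forall n (j : int) g, j != 0 -> N n (n%:Z + j) g = 0.
Proof.
move=> h0 h2; elim=> [|n IH] j g hj.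
  by rewrite N0 //; apply/eqP => /eqP; rewrite add0r (negbTE hj).
rewrite Q_rec // h0 h2 !mul0r !add0r !IH // ?addr0 ?mulr0 //.
Qed.

Lemma sum_cond n s (f : int -> R) :
  \sum_(w : Omega n | SX w == s) weight a b alpha beta w * f (SY w) = N n s f.
Proof.
rewrite big_mkcond; apply: eq_bigr => w _.
by case: (SX w == s); rewrite ?mul1r ?mul0r ?mulr0.
Qed.

Lemma probE n s : Prob a b alpha beta (fun w : Omega n => SX w == s) = N n s (fun _ => 1).
Proof. by rewrite -sum_cond; apply: eq_bigr => w _; rewrite mulr1. Qed.

Lemma cvE n s :
  cond_var a b alpha beta (fun w : Omega n => (SY w)%:~R) (fun w => SX w == s)
  = N n s (fun y => (y%:~R - N n s (fun y => y%:~R) / N n s (fun _ => 1)) ^+ 2)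
    / N n s (fun _ => 1).
Proof.
rewrite /cond_var /cond_exp -probE.
by rewrite (sum_cond n s (fun y => y%:~R)) (sum_cond n s (fun y => (y%:~R - _) ^+ 2)).
Qed.

End Final.

Theorem proposition3 (R : realFieldType) (a b alpha beta : R) (n x : nat) :
  0 <= a <= 1 -> 0 <= b <= 1 -> a + b = 1 ->
  0 <= alpha -> 0 <= beta -> alpha + beta = 1 / 2 ->
  (1 <= n)%N -> (x <= n)%N ->
  0 < Prob a b alpha beta (fun w => SX (n:=n) w == (n + x)%N%:Z) ->
  0 < Prob a b alpha beta (fun w => SX (n:=n) w == (n - x)%N%:Z) ->
  cond_var a b alpha beta (fun w => (SY (n:=n) w)%:~R) (fun w => SX (n:=n) w == (n + x)%N%:Z)
  = cond_var a b alpha beta (fun w => (SY (n:=n) w)%:~R) (fun w => SX (n:=n) w == (n - x)%N%:Z).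
Proof.
move=> /andP[ha0 ha1] /andP[hb0 hb1] hab hal0 hbe0 hal hn hxn P1 P2.
case: x hxn P1 P2 => [|x] hxn P1 P2; first by rewrite addn0 subn0.
rewrite !probE in P1 P2.
rewrite !cvE.
set Np := @N R a b alpha beta n (n + x.+1)%N%:Z.
set Nm := @N R a b alpha beta n (n - x.+1)%N%:Z.
have HS : forall g, (a + b * alpha) ^+ x.+1 * Np g = (b * alpha) ^+ x.+1 * Nm g.
  move=> g; rewrite /Np /Nm.
  rewrite (@N_ext R a b alpha beta n _ (n%:Z + x.+1%:Z) _ g) //.
  rewrite (@N_ext R a b alpha beta n (n - x.+1)%N%:Z (n%:Z - x.+1%:Z) g g) //; last by rewrite subzn.
  exact: sym.
set l := (a + b * alpha) ^+ x.+1 in HS; set m := (b * alpha) ^+ x.+1 in HS.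
have hl : l != 0.
  apply/eqP => hl0.
  have c00 : a + b * alpha = 0 by apply/eqP; move: hl0 => /eqP; rewrite expf_eq0.
  have c20 : b * alpha = 0.
    have : 0 <= b * alpha by apply: mulr_ge0.
    move=> h; lra.
  move: P1; rewrite /Np (@N_ext R a b alpha beta n _ (n%:Z + x.+1%:Z) _ (fun _ => 1)) //.
  by rewrite degen // ltxx.
have hm : m != 0.
  apply/eqP => hm0; have := HS (fun _ => 1); rewrite hm0 mul0r => /eqP.
  by rewrite mulf_eq0 (negbTE hl) /= => /eqP h; move: P1; rewrite -/Np h ltxx.
have HS' : forall g, Np g = (m / l) * Nm g.
  by move=> g; rewrite mulrAC -HS mulrAC mulfV // mul1r.
have hr : m / l != 0 by rewrite mulf_eq0 invr_eq0 negb_or hm hl.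
have hNm : Nm (fun _ => 1) != 0 by rewrite gt_eqF.
have E1 : Np (fun y : int => y%:~R) / Np (fun _ => 1) = Nm (fun y : int => y%:~R) / Nm (fun _ => 1).
  by rewrite !HS' -mulf_div divff // mul1r.
rewrite E1 HS' [Np _]HS' -mulf_div divff // mul1r.
by []. Qed.
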